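(* Fix $B>0$. For an integer $k\ge1$ and $p\in(0,1)$ let \[V_k(p)=\Big(\frac1p+\frac2{1-p}\Big)B^2k+\frac{2B^2(p^{k}-1)}{(1-p)^2},\] the worst-case (over potential outcomes in $[0,B]$) variance of the path-level Horvitz–Thompson estimator on an alternating path of length $k$ under the Alternating Path Randomized Design with parameter $p$. Let $p^*_k$ denote the optimal (minimizing) value of $p$ for $V_k$. Then $\lim_{k\to\infty}p^*_k=\sqrt2-1$.
   Context: Alternating Path Randomized Design on an alternating path with edges $e_1,\dots,e_k$ (consecutive edges alternate between treatment-only and control-only matches): indicators $W_1,\dots,W_k\in\{0,1\}$ with $\mathbb{P}(W_1=1)=p/(1+p)$ and, for $j\ge2$, conditionally on $W_1,\dots,W_{j-1}$, $W_j=1$ with probability $p$ if $W_{j-1}=0$ and $W_j=0$ if $W_{j-1}=1$. The path-level estimator is $\hat\Gamma=\sum_j (-1)^{j+1}W_jY_{e_j}/\mathbb{P}(W_j=1)$ (up to a global sign), and $V_k(p)=\max_{Y_{e_j}\in[0,B]}\mathrm{Var}(\hat\Gamma)$, which equals the displayed formula. The minimization is over the design parameter $p\in(0,1)$. *)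

(* Defs.v *)
From Stdlib Require Import Reals Lra.
Open Scope R_scope.

Definition V (B : R) (k : nat) (p : R) : R :=
  (1 / p + 2 / (1 - p)) * B ^ 2 * INR k + 2 * B ^ 2 * (p ^ k - 1) / (1 - p) ^ 2.

Definition is_minimizer (B : R) (k : nat) (p : R) : Prop :=
  0 < p < 1 /\ forall q, 0 < q < 1 -> V B k p <= V B k q.

(* Main.v *)
Require Import Defs.
From Stdlib Require Import Reals Lra Psatz.
Open Scope R_scope.

Fixpoint AA (q : R) (j : nat) : R :=
  match j with O => 0 | S j => AA q j + q ^ j end.
Fixpoint SS (q : R) (k : nat) : R :=
  match k with O => 0 | S k => SS q k + AA q k end.

Lemma A_closed q j : AA q j * (1 - q) = 1 - q ^ j.
Proof. induction j; simpl. ring.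
  replace ((AA q j + q ^ j) * (1 - q)) with (AA q j * (1 - q) + q^j * (1-q)) by ring.
  rewrite IHj. ring. Qed.

Lemma S_closed q k : SS q k * (1 - q) ^ 2 = INR k * (1 - q) - 1 + q ^ k.
Proof. induction k; simpl SS. simpl. ring.
  replace ((SS q k + AA q k) * (1 - q) ^ 2) with
    (SS q k * (1 - q) ^ 2 + (AA q k * (1 - q)) * (1 - q)) by ring.
  rewrite IHk, A_closed, S_INR. simpl. ring. Qed.

Lemma A_nonneg q j : 0 <= q -> 0 <= AA q j.
Proof. intros Hq; induction j; simpl. lra.
  pose proof (pow_le q j Hq). lra. Qed.

Lemma S_nonneg q k : 0 <= q -> 0 <= SS q k.
Proof. intros Hq; induction k; simpl. lra.
  pose proof (A_nonneg q k Hq). lra. Qed.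

Lemma A_mono r q j : 0 <= r <= q -> AA r j <= AA q j.
Proof. intros H; induction j; simpl. lra.
  pose proof (pow_incr r q j H). lra. Qed.

Lemma A_mono2 r q j : 0 <= r <= q -> AA q (S (S j)) - AA r (S (S j)) >= q - r.
Proof. intros H; induction j. simpl. lra.
  change (AA q (S (S (S j)))) with (AA q (S (S j)) + q ^ (S (S j))).
  change (AA r (S (S (S j)))) with (AA r (S (S j)) + r ^ (S (S j))).
  pose proof (pow_incr r q (S (S j)) H). lra. Qed.

Lemma S_mono r q j : 0 <= r <= q -> SS q (S (S j)) - SS r (S (S j)) >= INR j * (q - r).
Proof. intros H; induction j.
  simpl. lra.
  change (SS q (S (S (S j)))) with (SS q (S (S j)) + AA q (S (S j))).
  change (SS r (S (S (S j)))) with (SS r (S (S j)) + AA r (S (S j))).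
  pose proof (A_mono2 r q j H). rewrite S_INR. lra. Qed.

Definition g (q : R) := 1 / q + 2 / (1 - q).
Definition F (k : nat) (q : R) := INR k / q + 2 * SS q k.

Lemma V_F B k q : 0 < q < 1 -> V B k q = B ^ 2 * F k q.
Proof. intros Hq.
  assert (H: SS q k = (INR k * (1 - q) - 1 + q ^ k) / (1 - q) ^ 2).
  { rewrite <- S_closed. field. lra. }
  unfold V, F. rewrite H. field. lra. Qed.

Lemma F_eq k q : 0 < q < 1 ->
  F k q = INR k * g q - 2 / (1 - q) ^ 2 + 2 * q ^ k / (1 - q) ^ 2.
Proof. intros Hq.
  assert (H: SS q k = (INR k * (1 - q) - 1 + q ^ k) / (1 - q) ^ 2).
  { rewrite <- S_closed. field. lra. }
  unfold F, g. rewrite H. field. lra. Qed.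

Lemma pow_le1 q k : 0 <= q <= 1 -> q ^ k <= 1.
Proof. intros H. rewrite <- (pow1 k). apply pow_incr. lra. Qed.

Lemma F_upper k q : 0 < q < 1 -> F k q <= INR k * g q.
Proof. intros Hq. rewrite F_eq by lra.
  pose proof (pow_le1 q k ltac:(lra)).
  assert (0 < (1 - q) ^ 2) by (apply pow_lt; lra).
  assert (2 * q ^ k / (1 - q) ^ 2 <= 2 / (1 - q) ^ 2).
  { unfold Rdiv. apply Rmult_le_compat_r. apply Rlt_le, Rinv_0_lt_compat; lra. lra. }
  lra. Qed.

Lemma F_lower k q : 0 < q < 1 -> F k q >= INR k * g q - 2 / (1 - q) ^ 2.
Proof. intros Hq. rewrite F_eq by lra.
  pose proof (pow_le q k ltac:(lra)).
  assert (0 < (1 - q) ^ 2) by (apply pow_lt; lra).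
  assert (0 <= 2 * q ^ k / (1 - q) ^ 2).
  { unfold Rdiv. apply Rmult_le_pos. lra. apply Rlt_le, Rinv_0_lt_compat; lra. }
  lra. Qed.

Lemma F_mono j q : (4 <= j)%nat -> 9/10 <= q < 1 -> F (S (S j)) (9/10) <= F (S (S j)) q.
Proof. intros Hj Hq. unfold F.
  pose proof (S_mono (9/10) q j ltac:(lra)).
  assert (Hj' : 4 <= INR j) by (replace 4 with (INR 4) by (simpl; ring); apply le_INR; lia).
  rewrite !S_INR.
  set (u := 1 / q).
  assert (Hu : u * q = 1) by (unfold u; field; lra).
  assert (Hu0 : 0 < u) by (unfold u; apply Rdiv_lt_0_compat; lra).
  replace ((INR j + 1 + 1) / q) with ((INR j + 1 + 1) * u) by (unfold u; field; lra).
  assert (u <= 10/9) by nra.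
  assert (E1 : 10/9 - u = u * (10/9) * (q - 9/10)) by nra.
  assert (E2 : 10/9 - u <= (10/9) * (10/9) * (q - 9/10)) by nra.
  assert ((INR j + 1 + 1) * (10/9 - u) <= (INR j + 1 + 1) * ((10/9) * (10/9) * (q - 9/10))).
  { apply Rmult_le_compat_l. lra. lra. }
  replace ((INR j + 1 + 1) / (9/10)) with ((INR j + 1 + 1) * (10/9)) by field.
  nra. Qed.

Lemma g_id p : 0 < p < 1 ->
  (g p - (3 + 2 * sqrt 2)) * (p * (1 - p)) = (3 + 2 * sqrt 2) * (p - (sqrt 2 - 1)) ^ 2.
Proof. intros Hp.
  assert (Hs : sqrt 2 * sqrt 2 = 2) by (apply sqrt_sqrt; lra).
  assert (E : g p * (p * (1 - p)) = 1 + p) by (unfold g; field; lra).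
  replace ((g p - (3 + 2 * sqrt 2)) * (p * (1 - p))) with
    (g p * (p * (1 - p)) - (3 + 2 * sqrt 2) * (p * (1 - p))) by ring.
  rewrite E.
  replace ((3 + 2 * sqrt 2) * (p - (sqrt 2 - 1)) ^ 2) with
    ((3 + 2*sqrt 2) * p^2 - 2 * p * (3 * sqrt 2 - 3 + 2 * (sqrt 2 * sqrt 2) - 2 * sqrt 2)
     + (3 + 2 * sqrt 2) * (sqrt 2 * sqrt 2 + 1) - (3 + 2 * sqrt 2) * 2 * sqrt 2) by ring.
  rewrite Hs. ring_simplify.
  replace (sqrt 2 ^ 2) with 2 by (simpl; lra). ring. Qed.

Lemma g_lower p : 0 < p < 1 -> g p - (3 + 2 * sqrt 2) >= (p - (sqrt 2 - 1)) ^ 2.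
Proof. intros Hp. pose proof (g_id p Hp).
  assert (Hs0 : 0 <= sqrt 2) by apply sqrt_pos.
  set (d := (p - (sqrt 2 - 1))) in *. set (G := g p - (3 + 2 * sqrt 2)) in *.
  assert (0 < p * (1 - p) <= 1/4) by (split; [apply Rmult_lt_0_compat; lra | pose proof (pow2_ge_0 (p - 1/2)); nra]).
  assert (0 <= d^2) by (apply pow2_ge_0).
  nra. Qed.

Lemma sqrt2_bounds : 1 < sqrt 2 < 3/2.
Proof. assert (Hs : sqrt 2 * sqrt 2 = 2) by (apply sqrt_sqrt; lra).
  pose proof (sqrt_pos 2). nra. Qed.

Lemma g_pstar : g (sqrt 2 - 1) = 3 + 2 * sqrt 2.
Proof. pose proof sqrt2_bounds.
  pose proof (g_id (sqrt 2 - 1) ltac:(lra)).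
  replace (sqrt 2 - 1 - (sqrt 2 - 1)) with 0 in H0 by ring.
  assert (0 < (sqrt 2 - 1) * (1 - (sqrt 2 - 1))) by nra.
  simpl in H0. nra. Qed.

Lemma V_min_F B k p : 0 < B -> is_minimizer B k p -> forall q, 0 < q < 1 -> F k p <= F k q.
Proof. intros HB [Hp Hm] q Hq. specialize (Hm q Hq).
  rewrite !V_F in Hm by lra.
  assert (0 < B ^ 2) by (apply pow_lt; lra).
  apply (Rmult_le_reg_l (B^2)); lra. Qed.

Lemma F_09 j : (12 <= j)%nat -> F (S (S j)) (9/10) > INR (S (S j)) * (3 + 2 * sqrt 2).
Proof. intros Hj. pose proof (F_lower (S (S j)) (9/10) ltac:(lra)).
  pose proof sqrt2_bounds.
  assert (Hj' : 12 <= INR j) by (replace 12 with (INR 12) by (simpl; ring); apply le_INR; lia).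
  rewrite !S_INR in *. unfold g in H.
  replace (2 / (1 - 9/10)^2) with 200 in H by field.
  replace (1 / (9/10) + 2 / (1 - 9/10)) with (190/9) in H by field.
  nra. Qed.

Theorem corollary1 (B : R) (hB : 0 < B) :
  (exists N : nat, forall k : nat, (N <= k)%nat -> exists p, is_minimizer B k p) /\
  (forall ps : nat -> R,
     (exists N : nat, forall k : nat, (N <= k)%nat -> is_minimizer B k (ps k)) ->
     Un_cv ps (sqrt 2 - 1)).
Proof.
  split.
  - exists 6%nat. intros k Hk.
    destruct k as [|[|j]]; try lia.
    destruct (continuity_ab_min (fun q => V B (S (S j)) q) (1/22) (9/10)) as [mx [Hmx Hr]].
    + lra.
    + intros c Hc. unfold V. reg.
      * apply pow_nonzero; lra.
      * lra.
      * lra.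
    + exists mx. split. lra.
      intros q Hq.
      assert (HB2 : 0 < B ^ 2) by (apply pow_lt; lra).
      assert (Hv : V B (S (S j)) mx <= V B (S (S j)) (9/10)) by (apply Hmx; lra).
      destruct (Rle_lt_dec q (1/22)) as [Hq1|Hq1].
      *
        eapply Rle_trans. exact Hv.
        rewrite !V_F by lra. apply Rmult_le_compat_l. lra.
        pose proof (F_upper (S (S j)) (9/10) ltac:(lra)).
        unfold g in H. replace (1 / (9/10) + 2 / (1 - 9/10)) with (190/9) in H by field.
        unfold F. pose proof (S_nonneg q (S (S j)) ltac:(lra)).
        assert (Hk0 : 0 < INR (S (S j))) by (apply lt_0_INR; lia).
        assert (INR (S (S j)) / q >= 22 * INR (S (S j))).
        { unfold Rdiv. assert (/ q >= 22).
          { replace 22 with (/ (1/22)) by field. apply Rle_ge, Rinv_le_contravar; lra. }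
          nra. }
        unfold F in H. lra.
      * destruct (Rle_lt_dec q (9/10)) as [Hq2|Hq2].
        -- apply Hmx. lra.
        -- eapply Rle_trans. exact Hv.
           rewrite !V_F by lra. apply Rmult_le_compat_l. lra.
           apply F_mono. lia. lra.
  - intros ps [N HN] eps Heps.
    destruct (INR_archimed 1 (200 / eps ^ 2)) as [n0 Hn0]. lra.
    exists (N + n0 + 14)%nat. intros k Hkk.
    destruct k as [|[|j]]; try lia.
    specialize (HN (S (S j)) ltac:(lia)).
    pose proof HN as [Hp _].
    set (p := ps (S (S j))) in *.
    pose proof sqrt2_bounds.
    assert (HFp : F (S (S j)) p <= INR (S (S j)) * (3 + 2 * sqrt 2)).
    { eapply Rle_trans. apply (V_min_F B _ _ hB HN (sqrt 2 - 1)). lra.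
      rewrite <- g_pstar. apply F_upper. lra. }
    assert (Hp9 : p < 9/10).
    { destruct (Rlt_le_dec p (9/10)) as [h|h]. exact h.
      exfalso. pose proof (F_09 j ltac:(lia)).
      pose proof (F_mono j p ltac:(lia) ltac:(lra)). lra. }
    pose proof (F_lower (S (S j)) p Hp).
    assert (2 / (1 - p) ^ 2 <= 200).
    { assert (0 < (1-p)^2) by (apply pow_lt; lra).
      apply (Rmult_le_reg_r ((1-p)^2)). lra.
      unfold Rdiv. rewrite Rmult_assoc, Rinv_l by lra. nra. }
    pose proof (g_lower p Hp).
    assert (Hk : INR n0 <= INR (S (S j))) by (apply le_INR; lia).
    assert (Hk0 : 0 < INR (S (S j))) by (apply lt_0_INR; lia).
    assert (Hd : INR (S (S j)) * (p - (sqrt 2 - 1)) ^ 2 <= 200) by nra.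
    assert (Heps2 : 0 < eps ^ 2) by (apply pow_lt; lra).
    assert (200 < INR (S (S j)) * eps ^ 2).
    { assert (INR n0 > 200 / eps ^ 2) by lra.
      assert (200 / eps ^ 2 * eps ^ 2 = 200) by (field; lra).
      nra. }
    unfold R_dist. fold p.
    assert ((p - (sqrt 2 - 1)) ^ 2 < eps ^ 2) by nra.
    apply Rabs_def1; nra.
Qed.
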